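(* Let $D$ be an API-domain whose conductor $[D:\overline{D}]$ is nonzero. Then $D\subseteq\overline{D}$ is a bounded root extension, and hence $\overline{D}$ is an API-domain. Consequently, if $D$ is a quasilocal API-domain, not a field, with $[D:\overline{D}]\neq0$, then $\overline{D}$ is a DVR.
   Context: $\overline{D}$ is the integral closure of $D$ in its quotient field $K$; $[D:\overline{D}]=\{x\in K: x\overline{D}\subseteq D\}$. An API-domain is an integral domain in which for every nonempty subset $\{d_\alpha\}$ of nonzero elements there is $n$ with the ideal $(\{d_\alpha^n\})$ principal. $D\subseteq\overline D$ is a bounded root extension if there is a single natural number $n$ with $x^n\in D$ for all $x\in\overline D$. Quasilocal: unique maximal ideal. DVR: local PID not a field. *)

(* Defs.v *)
(* A domain D is modelled as a subring of its quotient field K. *)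
From HB Require Import structures.
From mathcomp Require Import all_boot all_order all_algebra.
Set Implicit Arguments. Unset Strict Implicit. Unset Printing Implicit Defensive.
Import Order.TTheory GRing.Theory Num.Theory.
Local Open Scope ring_scope.

Section Defs.
Variable K : fieldType.

Definition is_subring (A : K -> Prop) : Prop :=
  [/\ A 1, (forall x y, A x -> A y -> A (x - y)) & (forall x y, A x -> A y -> A (x * y))].

Definition is_quotient_field (A : K -> Prop) : Prop :=
  forall x : K, exists a b, [/\ A a, A b, b != 0 & x = a / b].

Definition int_closure (A : K -> Prop) : K -> Prop :=
  fun x => exists p : {poly K}, [/\ p \is monic, (forall i, A p`_i) & root p x].

Definition conductor (A B : K -> Prop) : K -> Prop :=
  fun x => forall y, B y -> A (x * y).

Definition gen_ideal (A S : K -> Prop) : K -> Prop :=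
  fun x => exists r : seq (K * K),
    (forall p, p \in r -> A p.1 /\ S p.2) /\ x = \sum_(p <- r) p.1 * p.2.

Definition is_ideal (A I : K -> Prop) : Prop :=
  [/\ (forall x, I x -> A x), I 0,
      (forall x y, I x -> I y -> I (x + y)) &
      (forall a x, A a -> I x -> I (a * x))].

Definition principal (A I : K -> Prop) : Prop :=
  exists g, A g /\ forall x, I x <-> exists a, A a /\ x = a * g.

Definition API (A : K -> Prop) : Prop :=
  forall S : K -> Prop, (exists s, S s) -> (forall s, S s -> A s /\ s != 0) ->
  exists n : nat, (0 < n)%N /\
    principal A (gen_ideal A (fun y => exists s, S s /\ y = s ^+ n)).

Definition bounded_root_ext (A B : K -> Prop) : Prop :=
  exists n : nat, (0 < n)%N /\ forall x, B x -> A (x ^+ n).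

Definition maximal_ideal (A M : K -> Prop) : Prop :=
  [/\ is_ideal A M, ~ M 1 &
      forall J, is_ideal A J -> (forall x, M x -> J x) -> ~ J 1 -> forall x, J x -> M x].

Definition quasilocal (A : K -> Prop) : Prop :=
  exists M, maximal_ideal A M /\ forall N, maximal_ideal A N -> forall x, N x <-> M x.

Definition is_field_sub (A : K -> Prop) : Prop :=
  forall x, A x -> x != 0 -> A x^-1.

Definition PID (A : K -> Prop) : Prop :=
  forall I, is_ideal A I -> principal A I.

Definition DVR (A : K -> Prop) : Prop :=
  [/\ quasilocal A, PID A & ~ is_field_sub A].

End Defs.

(* Main.v *)
From HB Require Import structures.
From mathcomp Require Import all_boot all_order all_algebra.
From mathcomp Require Import boolp classical_sets.
From mathcomp Require Import ring.
Require Import Defs.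
Set Implicit Arguments. Unset Strict Implicit. Unset Printing Implicit Defensive.
Import Order.TTheory GRing.Theory Num.Theory.
Local Open Scope ring_scope.

Section Sub.
Variables (K : fieldType) (D : K -> Prop) (hD : is_subring D).
Definition Dp : {pred K} := fun x => `[< D x >].
Lemma Dp_subring : subring_closed Dp.
Proof.
case: hD => h1 hB hM; split; rewrite /Dp /=.
- exact/asboolP.
- by move=> x y /asboolP ? /asboolP ?; apply/asboolP; apply: hB.
- by move=> x y /asboolP ? /asboolP ?; apply/asboolP; apply: hM.
Qed.
HB.instance Definition _ := GRing.isSubringClosed.Build K Dp Dp_subring.
Record DT := MkDT { dval : K; _ : dval \in Dp }.
HB.instance Definition _ := [isSub for dval].
HB.instance Definition _ := [Choice of DT by <:].
HB.instance Definition _ := [SubChoice_isSubComNzRing of DT by <:].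

Lemma D1 : D 1. Proof. by case: hD. Qed.
Lemma DB x y : D x -> D y -> D (x - y). Proof. by case: hD => _ h _; apply: h. Qed.
Lemma DM x y : D x -> D y -> D (x * y). Proof. by case: hD => _ _ h; apply: h. Qed.
Lemma D0 : D 0. Proof. by rewrite -(subrr 1); apply: DB; apply: D1. Qed.
Lemma DN x : D x -> D (- x). Proof. by move=> h; rewrite -sub0r; apply: DB => //; apply: D0. Qed.
Lemma DD x y : D x -> D y -> D (x + y).
Proof. by move=> hx hy; rewrite -[y]opprK; apply: DB => //; apply: DN. Qed.
Lemma DX x n : D x -> D (x ^+ n).
Proof. by move=> hx; elim: n => [|n IH]; [rewrite expr0; apply: D1 | rewrite exprS; apply: DM]. Qed.

Lemma DpE x : (x \in Dp) <-> D x.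
Proof. rewrite /Dp unfold_in /=; split; [by move/asboolP | by move=> h; apply/asboolP]. Qed.

Lemma intE x : int_closure D x <-> integralOver (val : DT -> K) x.
Proof.
split.
- case=> p [mp cp rp].
  pose q : {poly DT} := \poly_(i < size p) (insubd (0:DT) p`_i).
  have qp : map_poly val q = p.
    apply/polyP => i; rewrite coef_map coef_poly.
    case: ltnP => hi; last by rewrite /= nth_default.
    by rewrite /= insubdK //; apply/DpE; apply: cp.
  exists q; last by rewrite qp.
  apply/monicP/val_inj; rewrite -lead_coef_map_inj ?qp; first exact/monicP.
  exact: val_inj. exact: rmorph0.
- case=> q mq rq; exists (map_poly val q); split => //.
  + exact: monic_map.
  + by move=> i; rewrite coef_map; apply/DpE; apply: valP.
Qed.

Local Notation V := (int_closure D).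

Lemma V_D x : D x -> V x.
Proof.
move=> Dx; apply/intE.
have -> : x = val (insubd (0 : DT) x) by rewrite /= insubdK //; apply/DpE.
exact: integral_id.
Qed.
Lemma V0 : V 0. Proof. exact/V_D/D0. Qed.
Lemma V1 : V 1. Proof. exact/V_D/D1. Qed.
Lemma VD x y : V x -> V y -> V (x + y).
Proof. by move=> /intE hx /intE hy; apply/intE; apply: integral_add. Qed.
Lemma VM x y : V x -> V y -> V (x * y).
Proof. by move=> /intE hx /intE hy; apply/intE; apply: integral_mul. Qed.
Lemma VN x : V x -> V (- x).
Proof. by move=> /intE hx; apply/intE; apply: integral_opp. Qed.
Lemma VX x n : V x -> V (x ^+ n).
Proof. by move=> hx; elim: n => [|n IH]; [rewrite expr0; apply: V1 | rewrite exprS; apply: VM]. Qed.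

Lemma Dnat (b : bool) : D (b%:R).
Proof. by case: b; [apply: D1 | apply: D0]. Qed.

Lemma Vroot n x : (0 < n)%N -> D (x ^+ n) -> V x.
Proof.
move=> n0 Dx; exists ('X^n - (x ^+ n)%:P); split.
- exact: monicXnsubC.
- move=> i; rewrite coefB coefXn coefC; apply: DB; first exact: Dnat.
  by case: (i == 0%N) => //; apply: D0.
- by rewrite /root !hornerE subrr.
Qed.

End Sub.

Lemma single_gen (K : fieldType) (A T : K -> Prop) t : A 1 -> T t -> gen_ideal A T t.
Proof.
move=> A1 Tt; exists [:: (1, t)]; split; last by rewrite big_seq1 mul1r.
by move=> p; rewrite inE => /eqP -> /=.
Qed.

Lemma sum_in (K : fieldType) (P : K -> Prop) (r : seq (K * K)) (f : K * K -> K) :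
  P 0 -> (forall u v, P u -> P v -> P (u + v)) -> (forall p, p \in r -> P (f p)) ->
  P (\sum_(p <- r) f p).
Proof.
move=> P0 PD; elim: r => [|p r IH] Hr; first by rewrite big_nil.
rewrite big_cons; apply: PD; first by apply: Hr; rewrite inE eqxx.
by apply: IH => q qr; apply: Hr; rewrite inE qr orbT.
Qed.

Section Main.
Variables (K : fieldType) (D : K -> Prop) (hD : is_subring D) (hAPI : API D).
Variables (c : K) (hc : conductor D (int_closure D) c) (hc0 : c != 0).
Local Notation V := (int_closure D).

Lemma bounded : bounded_root_ext D V.
Proof.
pose S := fun s => exists y, V y /\ y != 0 /\ s = c * y.
have S1 : exists s, S s.
  by exists c, 1; split; [exact: V1 | split; [exact: oner_neq0 | by rewrite mulr1]].
have S2 : forall s, S s -> D s /\ s != 0.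
  by move=> s [y [Vy [y0 ->]]]; split; [apply: hc | apply: mulf_neq0].
have [n [n0 [g [Dg Hg]]]] := hAPI S1 S2.
set T := (fun y => exists s, S s /\ y = s ^+ n) in Hg.
have single t : T t -> exists a, D a /\ t = a * g.
  by move=> Tt; apply/Hg/single_gen => //; apply: D1.
have cn0 : c ^+ n != 0 by apply: expf_neq0.
have gn0 : g != 0.
  have [a [_ Ea]] : exists a, D a /\ c ^+ n = a * g.
    apply: single; exists c; split => //; exists 1; split; [exact: V1|split; [exact: oner_neq0|by rewrite mulr1]].
  by apply: contraNneq cn0 => g0; rewrite Ea g0 mulr0.
pose h := g / c ^+ n.
have hn0 : h != 0 by rewrite mulf_neq0 // invr_eq0.
pose P w := exists a, D a /\ w = a * h.
have P0 : P 0 by exists 0; split; [apply: D0 | rewrite mul0r].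
have PD u v : P u -> P v -> P (u + v).
  by move=> [a [Da ->]] [b [Db ->]]; exists (a + b); split; [apply: DD | rewrite mulrDl].
have PM d u : D d -> P u -> P (d * u).
  by move=> Dd [a [Da ->]]; exists (d * a); split; [apply: DM | rewrite mulrA].
have Py y : V y -> P (y ^+ n).
  move=> Vy; have [->|y0] := eqVneq y 0.
    by rewrite expr0n eqn0Ngt n0 /=; apply: P0.
  have [a [Da Ea]] : exists a, D a /\ (c * y) ^+ n = a * g.
    by apply: single; exists (c * y); split => //; exists y.
  exists a; split => //; rewrite /h mulrA -Ea exprMn mulrC mulrA mulVf // mul1r //.
have [r [Hr Eg]] : gen_ideal D T g by apply/Hg; exists 1; split; [apply: D1 | rewrite mul1r].
have sumP (f : K -> K) : (forall t, T t -> P (f t)) -> P (\sum_(p <- r) p.1 * f p.2).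
  move=> Hf; apply: sum_in => // p pr; have [Dp Tp] := Hr p pr; exact: PM (Hf _ Tp).
have Phy y : V y -> P (h * y ^+ n).
  move=> Vy.
  have -> : h * y ^+ n = \sum_(p <- r) p.1 * (p.2 * ((c ^+ n)^-1 * y ^+ n)).
    by rewrite /h Eg !mulr_suml; apply: eq_bigr => p _; rewrite -!mulrA.
  apply: (sumP (fun t => t * ((c ^+ n)^-1 * y ^+ n))) => t [s [[y' [Vy' [_ ->]]] ->]].
  have -> : (c * y') ^+ n * ((c ^+ n)^-1 * y ^+ n) = (y' * y) ^+ n.
    by rewrite !exprMn; field.
  by apply: Py; apply: VM.
have Phh : P (h * h).
  have -> : h * h = \sum_(p <- r) p.1 * (p.2 * ((c ^+ n)^-1 * h)).
    by rewrite {1}/h Eg !mulr_suml; apply: eq_bigr => p _; rewrite -!mulrA.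
  apply: (sumP (fun t => t * ((c ^+ n)^-1 * h))) => t [s [[y' [Vy' [_ ->]]] ->]].
  have -> : (c * y') ^+ n * ((c ^+ n)^-1 * h) = h * y' ^+ n.
    by rewrite !exprMn; field.
  exact: Phy.
have Dh : D h.
  by case: Phh => a [Da Ea]; have := mulIf hn0 Ea => ->.
exists n; split => // x Vx.
by case: (Py x Vx) => a [Da ->]; apply: DM.
Qed.

Lemma APIV : API V.
Proof.
have [m [m0 Hm]] := bounded.
move=> S [s0 Ss0] HS.
pose S' := fun t => exists s, S s /\ t = s ^+ m.
have S1 : exists t, S' t by exists (s0 ^+ m), s0.
have S2 : forall t, S' t -> D t /\ t != 0.
  move=> t [s [Ss ->]]; have [Vs s0'] := HS s Ss.
  by split; [apply: Hm | apply: expf_neq0].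
have [n [n0 [g [Dg Hg]]]] := hAPI S1 S2.
exists (m * n)%N; split; first by rewrite muln_gt0 m0 n0.
exists g; split; first exact: V_D.
move=> x; split.
- case=> r [Hr ->]; elim: r Hr => [|p r IH] Hr.
    by exists 0; split; [apply: V0 | rewrite big_nil mul0r].
  have [q qr|a [Va Ea]] := IH; first by apply: Hr; rewrite inE qr orbT.
  have [Vp1 [s [Ss Ep2]]] := Hr p (mem_head p r).
  have [b [Db Eb]] : exists b, D b /\ p.2 = b * g.
    apply/Hg/single_gen; first exact: D1.
    by exists (s ^+ m); split; [exists s | rewrite Ep2 exprM].
  exists (p.1 * b + a); split; first by apply: VD => //; apply: VM => //; apply: V_D.
  by rewrite big_cons Ea Eb mulrDl mulrA.
- case=> a [Va ->].
  have [r [Hr Eg]] : gen_ideal D (fun y => exists s, S' s /\ y = s ^+ n) g.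
    by apply/Hg; exists 1; split; [apply: D1 | rewrite mul1r].
  exists (map (fun q => (a * q.1, q.2)) r); split.
    move=> p /mapP [q qr ->] /=; have [Dq [t [[s [Ss ->]] ->]]] := Hr q qr.
    by split; [apply: VM => //; apply: V_D | exists s; rewrite exprM].
  by rewrite big_map Eg mulr_sumr; apply: eq_bigr => q _ /=; rewrite mulrA.
Qed.

Lemma Vroot' k x : (0 < k)%N -> V (x ^+ k) -> V x.
Proof.
have [m [m0 Hm]] := bounded.
move=> k0 /Hm; rewrite -exprM => Dx; apply: (Vroot hD _ Dx).
by rewrite muln_gt0 k0 m0.
Qed.

End Main.

Section Local.
Variables (K : fieldType) (D : K -> Prop) (hD : is_subring D) (hQ : is_quotient_field D).
Variables (hAPI : API D) (c : K) (hc : conductor D (int_closure D) c) (hc0 : c != 0).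
Variables (hql : quasilocal D) (hnf : ~ is_field_sub D).
Local Notation V := (int_closure D).

Lemma nonunit_max (al : K) : D al -> ~ (al != 0 /\ D al^-1) ->
  exists N, maximal_ideal D N /\ N al.
Proof.
move=> Dal nu.
pose P (I : set K) := (forall x, ~ I x) \/ (is_ideal D I /\ ~ I 1 /\ I al).
have [|A [PA Amax]] := @Zorn_bigcup K P.
  move=> F FP Ftot.
  have [[X0 [FX0 [x0 X0x0]]]|none] := pselect (exists X, F X /\ exists x, X x); last first.
    by left => x [X FX Xx]; apply: none; exists X; split => //; exists x.
  have ideal_of X x : F X -> X x -> is_ideal D X /\ ~ X 1 /\ X al.
    by move=> FX Xx; case: (FP X FX) => [/(_ x Xx)//|].
  have [iX0 [nX0 aX0]] := ideal_of X0 x0 FX0 X0x0.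
  right; split; last split.
  - split.
    + by move=> x [X FX Xx]; have [[]] := ideal_of X x FX Xx; auto.
    + by exists X0 => //; case: iX0.
    + move=> x y [X FX Xx] [Y FY Yy].
      have [[iX _] [iY _]] := (ideal_of X x FX Xx, ideal_of Y y FY Yy).
      case: (Ftot X Y FX FY) => [XY|YX].
      * by exists Y => //; case: iY => _ _ hadd _; apply: hadd => //; apply: XY.
      * by exists X => //; case: iX => _ _ hadd _; apply: hadd => //; apply: YX.
    + move=> a x Da [X FX Xx]; have [iX _] := ideal_of X x FX Xx.
      by exists X => //; case: iX => _ _ _ hm; apply: hm.
  - by move=> [X FX X1]; have [_ []] := ideal_of X 1 FX X1.
  - by exists X0.
pose B0 := fun x => exists d, D d /\ x = d * al.
have iB0 : is_ideal D B0.
  split.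
  - by move=> x [d [Dd ->]]; apply: DM.
  - by exists 0; split; [apply: D0 | rewrite mul0r].
  - by move=> x y [d [Dd ->]] [e [De ->]]; exists (d + e); split; [apply: DD | rewrite mulrDl].
  - by move=> a x Da [d [Dd ->]]; exists (a * d); split; [apply: DM | rewrite mulrA].
have nB0 : ~ B0 1.
  move=> [d [Dd E]]; apply: nu.
  have al0 : al != 0 by apply: contra_eq_neq E => ->; rewrite mulr0 oner_neq0.
  split => //; suff -> : al^-1 = d by [].
  by apply: (mulIf al0); rewrite mulVf.
have B0al : B0 al by exists 1; split; [apply: D1 | rewrite mul1r].
case: PA => [Aem|[iA [nA Aal]]].
  exfalso; apply: (Amax B0); last by right.
  by split => [x /Aem//|/(_ al B0al)/Aem].
exists A; split => //; split => // J iJ AJ nJ x Jx.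
apply/not_notP => nAx.
apply: (Amax J); first by split => // /(_ x Jx).
right; split => //; split => //; exact: AJ.
Qed.

Lemma loc u v : D u -> D v -> u + v = 1 ->
  (u != 0 /\ D u^-1) \/ (v != 0 /\ D v^-1).
Proof.
move=> Du Dv Euv; have [M [[iM nM Mmax] Muniq]] := hql.
have inM al : D al -> ~ (al != 0 /\ D al^-1) -> M al.
  move=> Dal nu; have [N [mN Nal]] := nonunit_max Dal nu.
  by apply/(Muniq N mN).
apply/not_notP => H; apply: nM; rewrite -Euv.
case: iM => _ _ hadd _; apply: hadd; apply: inM => // h; apply: H; auto.
Qed.

Lemma valuation x : V x \/ V x^-1.
Proof.
have [->|x0] := eqVneq x 0; first by left; apply: V0.
have [a [b [Da Db b0 Ex]]] := hQ x.
have a0 : a != 0 by apply: contraNneq x0 => a0; rewrite Ex a0 mul0r.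
pose S := fun s => s = a \/ s = b.
have S1 : exists s, S s by exists a; left.
have S2 : forall s, S s -> D s /\ s != 0 by move=> s [->|->].
have [n [n0 [g [Dg Hg]]]] := hAPI S1 S2.
have single s : S s -> exists al, D al /\ s ^+ n = al * g.
  by move=> Ss; apply/Hg/single_gen; [apply: D1 | exists s].
have [al [Dal Ea]] := single a (or_introl erefl).
have [be [Dbe Eb]] := single b (or_intror erefl).
have [r [Hr Eg]] : gen_ideal D (fun y => exists s, S s /\ y = s ^+ n) g.
  by apply/Hg; exists 1; split; [apply: D1 | rewrite mul1r].
have [u [w [Du [Dw Eguv]]]] : exists u w, D u /\ D w /\ g = u * a ^+ n + w * b ^+ n.
  rewrite Eg; elim: r Hr {Eg} => [|p r IH] Hr.
    by exists 0, 0; rewrite big_nil !mul0r addr0; split; [apply: D0 | split; [apply: D0|]].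
  have [q qr|u [w [Du [Dw E]]]] := IH; first by apply: Hr; rewrite inE qr orbT.
  have [Dp [s [[Es|Es] Ep]]] := Hr p (mem_head p r); rewrite big_cons Ep Es.
    exists (p.1 + u), w; rewrite E; split; [by apply: DD | split => //].
    by rewrite mulrDl addrA.
  exists u, (p.1 + w); rewrite E; split => //; split; [by apply: DD|].
  by rewrite mulrDl addrCA addrA.
have an0 : a ^+ n != 0 by apply: expf_neq0.
have g0 : g != 0 by apply: contraNneq an0 => g0; rewrite Ea g0 mulr0.
have E1 : u * al + w * be = 1.
  by apply: (mulIf g0); rewrite mul1r mulrDl -!mulrA -Ea -Eb Eguv.
have [[ua0 Dua]|[wb0 Dwb]] := loc (DM hD Du Dal) (DM hD Dw Dbe) E1.
- right; apply: (Vroot hD n0).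
  have al0 : al != 0 by apply: contraNneq ua0 => ->; rewrite mulr0.
  have u0 : u != 0 by apply: contraNneq ua0 => ->; rewrite mul0r.
  have -> : (x^-1) ^+ n = be * (u * (u * al)^-1).
    rewrite Ex invf_div expr_div_n Ea Eb invfM; field.
    by rewrite g0 al0 u0.
  by apply: DM => //; apply: DM.
- left; apply: (Vroot hD n0).
  have be0 : be != 0 by apply: contraNneq wb0 => ->; rewrite mulr0.
  have w0 : w != 0 by apply: contraNneq wb0 => ->; rewrite mul0r.
  have -> : x ^+ n = al * (w * (w * be)^-1).
    rewrite Ex expr_div_n Ea Eb invfM; field.
    by rewrite g0 be0 w0.
  by apply: DM => //; apply: DM.
Qed.

Definition Un x := x != 0 /\ V x^-1.
Definition Mv x := V x /\ ~ Un x.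

Lemma proper_sub J : is_ideal V J -> ~ J 1 -> forall x, J x -> Mv x.
Proof.
move=> [JV _ _ Jm] nJ x Jx; split; first exact: JV.
move=> [x0 Vx]; apply: nJ; rewrite -(mulVf x0); exact: Jm.
Qed.

Lemma Mv_ideal : is_ideal V Mv.
Proof.
split.
- by move=> x [].
- by split; [apply: V0 | case; rewrite eqxx].
- move=> x y [Vx nx] [Vy ny]; split; first exact: VD.
  move=> [xy0 Vxy].
  have [x0|x0] := eqVneq x 0; first by apply: ny; rewrite -(add0r y) -x0.
  have [y0|y0] := eqVneq y 0; first by apply: nx; rewrite -(addr0 x) -y0.
  case: (valuation (y / x)) => [Vyx|].
    apply: nx; split => //.
    have -> : x^-1 = (1 + y / x) * (x + y)^-1 by field; rewrite xy0 x0.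
    by apply: VM => //; apply: VD => //; apply: V1.
  rewrite invf_div => Vxy'; apply: ny; split => //.
  have -> : y^-1 = (1 + x / y) * (x + y)^-1 by field; rewrite xy0 y0.
  by apply: VM => //; apply: VD => //; apply: V1.
- move=> a x Va [Vx nx]; split; first exact: VM.
  move=> [ax0 Vax]; apply: nx.
  have x0 : x != 0 by apply: contraNneq ax0 => ->; rewrite mulr0.
  have a0 : a != 0 by apply: contraNneq ax0 => ->; rewrite mul0r.
  split => //; have -> : x^-1 = a * (a * x)^-1 by field; rewrite a0 x0.
  exact: VM.
Qed.

Lemma nMv1 : ~ Mv 1.
Proof. by case=> _; apply; split; [apply: oner_neq0 | rewrite invr1; apply: V1]. Qed.

Lemma quasilocalV : quasilocal V.
Proof.
exists Mv; split.
  split; [exact: Mv_ideal | exact: nMv1 | move=> J iJ _ nJ; exact: proper_sub].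
move=> N [iN nN Nmax] x; split; first exact: proper_sub.
apply: Nmax => //; [exact: Mv_ideal | exact: proper_sub | exact: nMv1].
Qed.

Lemma notfieldV : ~ is_field_sub V.
Proof.
have [m [m0 Hm]] := bounded hD hAPI hc hc0.
move=> hf; apply: hnf => x Dx x0.
have /Hm Dxm : V x^-1 by apply: hf => //; apply: V_D.
case: m m0 Hm Dxm => // k _ _ Dxm.
have -> : x^-1 = x ^+ k * x^-1 ^+ k.+1.
  by rewrite exprSr mulrA -exprMn mulfV // expr1n mul1r.
by apply: DM => //; apply: DX.
Qed.

Lemma PIDV : PID V.
Proof.
move=> I iI; case: (iI) => IV I0 Iadd Im.
have [[s0 [Is0 s00]]|none] := pselect (exists s, I s /\ s != 0); last first.
  exists 0; split; first exact: V0.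
  move=> x; split.
    move=> Ix; exists 0; split; first exact: V0.
    by rewrite mulr0; apply/eqP; apply: contraT => x0; exfalso; apply: none; exists x.
  by case=> a [_ ->]; rewrite mulr0.
pose S := fun s => I s /\ s != 0.
have S1 : exists s, S s by exists s0.
have S2 : forall s, S s -> V s /\ s != 0 by move=> s [Is s0']; split => //; apply: IV.
have [n [n0 [g [Vg Hg]]]] := APIV hD hAPI hc hc0 S1 S2.
have [r [Hr Eg]] : gen_ideal V (fun y => exists s, S s /\ y = s ^+ n) g.
  by apply/Hg; exists 1; split; [apply: V1 | rewrite mul1r].
have [t [[It t0] Ht]] : exists t, S t /\ forall p, p \in r -> V (p.2 / t ^+ n).
  elim: r Hr {Eg} => [|p r IH] Hr; first by exists s0; split => //; split.
  have [q qr|t [St Ht]] := IH; first by apply: Hr; rewrite inE qr orbT.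
  have [Vp [s [[Is s0'] Ep]]] := Hr p (mem_head p r).
  have tn0 : t ^+ n != 0 by apply: expf_neq0; case: St.
  have sn0 : s ^+ n != 0 by apply: expf_neq0.
  case: (valuation (s / t)) => [Vst|].
    exists t; split => // q; rewrite inE => /orP [/eqP ->|qr]; last exact: Ht.
    by rewrite Ep -expr_div_n; apply: VX.
  rewrite invf_div => Vts; exists s; split => // q; rewrite inE => /orP [/eqP ->|qr].
    by rewrite Ep mulfV //; apply: V1.
  have -> : q.2 / s ^+ n = q.2 / t ^+ n * (t / s) ^+ n.
    by rewrite expr_div_n; field; rewrite tn0 sn0.
  by apply: (VM hD); [exact: Ht qr | apply: VX].
have tn0 : t ^+ n != 0 by apply: expf_neq0.
pose w := \sum_(p <- r) p.1 * (p.2 / t ^+ n).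
have Vw : V w.
  apply: sum_in; [exact: V0 | move=> u v; exact: VD|] => p pr.
  by apply: (VM hD); [case: (Hr p pr) | exact: Ht pr].
have Egw : g = w * t ^+ n.
  by rewrite Eg /w mulr_suml; apply: eq_bigr => p _; rewrite -mulrA mulfVK.
have divt s : I s -> V (s / t).
  move=> Is; have [->|s0'] := eqVneq s 0; first by rewrite mul0r; apply: V0.
  have [b [Vb Eb]] : exists b, V b /\ s ^+ n = b * g.
    by apply/Hg/single_gen; [apply: V1 | exists s; split].
  apply: (Vroot' hD hAPI hc hc0 n0); rewrite expr_div_n Eb Egw mulrA mulfK //.
  exact: VM.
exists t; split; first exact: IV.
move=> x; split.
  move=> Ix; exists (x / t); split; first exact: divt.
  by rewrite mulfVK.
by case=> a [Va ->]; apply: Im.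
Qed.

Lemma DVRV : DVR V.
Proof. split; [exact: quasilocalV | exact: PIDV | exact: notfieldV]. Qed.

End Local.

Unset Implicit Arguments.
Theorem theorem4 (K : fieldType) (D : K -> Prop) :
  is_subring D -> is_quotient_field D -> API D ->
  (exists c, conductor D (int_closure D) c /\ c != 0) ->
  [/\ bounded_root_ext D (int_closure D),
      API (int_closure D) &
      (quasilocal D -> ~ is_field_sub D -> DVR (int_closure D))].
Proof.
move=> hD hQ hAPI [c [hc hc0]]; split.
- exact (bounded hD hAPI hc hc0).
- exact (APIV hD hAPI hc hc0).
- move=> hql hnf; exact (DVRV hD hQ hAPI hc hc0 hql hnf).
Qed.
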